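(* Let $\mu^\diamond\in\mathrm{Meas}(\mathcal X)$ be a tomographically complete measurement with finite outcome set $\mathcal Y$. Then for every finite quantum score $S$ on $\mathcal X$ there exists a quantum score $S^\diamond=(s^\diamond,\mu^{\mathrm c})$ with constant measurement function $\mu^{\mathrm c}(\rho)=\mu^\diamond$ for all $\rho$, such that $S^\diamond(\rho';\rho)=S(\rho';\rho)$ for all $\rho,\rho'\in\mathrm{Dens}(\mathcal X)$.
   Context: Let $\mathcal X=\mathbb C^n$, $\mathrm{Herm}(\mathcal X)$ the Hermitian matrices with $\langle X,Y\rangle=\mathrm{Tr}(X^*Y)$, $\mathrm{Pos}(\mathcal X)$ the positive semidefinite ones, $\mathrm{Dens}(\mathcal X)$ the trace-one elements of $\mathrm{Pos}(\mathcal X)$. A measurement with finite outcome set $\mathcal Y\subseteq\mathbb N$ is $\mu=\{\mu_y\}_{y\in\mathcal Y}\subseteq\mathrm{Pos}(\mathcal X)$ with $\sum_y\mu_y=I$; it is tomographically complete if the real span of $\{\mu_y\}$ is $\mathrm{Herm}(\mathcal X)$. A quantum score is $S=(s,\mu)$ with $s:\mathrm{Dens}(\mathcal X)\times\mathbb N\to\mathbb R\cup\{\pm\infty\}$, $\mu:\mathrm{Dens}(\mathcal X)\to\mathrm{Meas}(\mathcal X)$ (outcome set $\mathcal Y(\rho')$ of $\mu(\rho')$), with expected score $S(\rho';\rho)=\sum_{y\in\mathcal Y(\rho')}\langle\mu(\rho')_y,\rho\rangle s(\rho',y)$. $S$ is finite if $s$ takes only real values. *)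

(* Defs.v *)
From HB Require Import structures.
From mathcomp Require Import all_boot all_order all_algebra.
From mathcomp Require Import complex.
From mathcomp Require Import reals constructive_ereal.
Set Implicit Arguments.
Unset Strict Implicit.
Unset Printing Implicit Defensive.
Import Order.TTheory GRing.Theory Num.Theory.
Local Open Scope ring_scope.
Local Open Scope sesquilinear_scope.

Section QScores.
Variables (R : realType) (n : nat).
Local Notation C := R[i].
Local Notation mat := 'M[C]_n.

Definition herm (X : mat) : Prop := X ^t* = X.

Definition hs_inner (X Y : mat) : C := \tr (X ^t* *m Y).

Definition psd (X : mat) : Prop :=
  herm X /\ forall v : 'rV[C]_n, 0 <= (v *m X *m v ^t*) 0 0.

Definition is_dens (X : mat) : Prop := psd X /\ \tr X = 1.
Definition dens := {rho : mat | is_dens rho}.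

Record meas := Meas {
  outcomes : seq nat;
  effect : nat -> mat;
  outcomes_uniq : uniq outcomes;
  effect_psd : forall y, y \in outcomes -> psd (effect y);
  effect_sum : \sum_(y <- outcomes) effect y = 1%:M }.

Definition tomo_complete (mu : meas) : Prop :=
  forall H : mat,
    herm H <-> exists c : nat -> R,
      H = \sum_(y <- outcomes mu) ((c y)%:C)%C *: effect mu y.

Record qscore := QScore {
  qs_s : dens -> nat -> \bar R;
  qs_mu : dens -> meas }.

Definition qs_finite (S : qscore) : Prop :=
  forall rho' y, exists r : R, qs_s S rho' y = r%:E.

(* Expected score S(rho'; rho) = sum_{y in Y(rho')} <mu(rho')_y, rho> s(rho', y).
   The inner product is real (Hermitian arguments); we take its real part. *)
Definition expected_score (S : qscore) (rho' rho : dens) : \bar R :=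
  (\sum_(y <- outcomes (qs_mu S rho'))
     ((complex.Re (hs_inner (effect (qs_mu S rho') y) (proj1_sig rho)))%:E
        * qs_s S rho' y))%E.

End QScores.

(* Main.v *)
Require Import Defs.
From HB Require Import structures.
From mathcomp Require Import all_boot all_order all_algebra.
From mathcomp Require Import complex.
From mathcomp Require Import reals constructive_ereal.
Set Implicit Arguments. Unset Strict Implicit.
Import Order.TTheory GRing.Theory Num.Theory.
Local Open Scope ring_scope.
Local Open Scope sesquilinear_scope.

Lemma ReD (R : realType) (a b : R[i]) : complex.Re (a + b) = complex.Re a + complex.Re b.
Proof. by case: a; case: b. Qed.

Lemma ReMr (R : realType) (r : R) (b : R[i]) : complex.Re ((r%:C)%C * b) = r * complex.Re b.
Proof. case: b => x y /=. by rewrite mul0r subr0. Qed.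

Lemma conj_real (R : realType) (r : R) : Num.conj ((r%:C)%C : R[i]) = (r%:C)%C.
Proof. exact: conjc_real. Qed.

Lemma hs_innerD (R : realType) n (X Y Z : 'M[R[i]]_n) :
  hs_inner (X + Y) Z = hs_inner X Z + hs_inner Y Z.
Proof. by rewrite /hs_inner linearD /= map_mxD mulmxDl mxtraceD. Qed.

Lemma hs_innerZ (R : realType) n (r : R) (X Z : 'M[R[i]]_n) :
  hs_inner ((r%:C)%C *: X) Z = (r%:C)%C * hs_inner X Z.
Proof. rewrite /hs_inner linearZ /= map_mxZ. rewrite [X in X *: _](_ : _ = (r%:C)%C); last exact: conjc_real. by rewrite -scalemxAl mxtraceZ. Qed.

Lemma hs_inner0 (R : realType) n (Z : 'M[R[i]]_n) : hs_inner 0 Z = 0.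
Proof. by rewrite /hs_inner linear0 map_mx0 mul0mx mxtrace0. Qed.

Lemma sum_Re (R : realType) n (s : seq nat) (f : nat -> R) (E : nat -> 'M[R[i]]_n) rho :
  \sum_(y <- s) complex.Re (hs_inner (E y) rho) * f y
  = complex.Re (hs_inner (\sum_(y <- s) ((f y)%:C)%C *: E y) rho).
Proof.
elim: s => [|y s IH]; first by rewrite !big_nil hs_inner0.
by rewrite !big_cons hs_innerD hs_innerZ ReD ReMr IH mulrC.
Qed.

Lemma herm_sum (R : realType) n (s : seq nat) (f : nat -> R) (E : nat -> 'M[R[i]]_n) :
  (forall y, y \in s -> herm (E y)) -> herm (\sum_(y <- s) ((f y)%:C)%C *: E y).
Proof.
elim: s => [|y s IH] H; first by rewrite big_nil /herm linear0 map_mx0.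
rewrite big_cons /herm linearD /= map_mxD linearZ /= map_mxZ.
rewrite [X in X *: _](_ : _ = ((f y)%:C)%C); last exact: conjc_real.
rewrite (H y (mem_head _ _)).
by rewrite (IH (fun z hz => H z (mem_behead (s:=y :: s) hz))).
Qed.

From Stdlib Require Import ClassicalEpsilon.

Theorem proposition3p4 (R : realType) (n : nat) (mu0 : meas R n) :
  tomo_complete mu0 ->
  forall S : qscore R n, qs_finite S ->
  exists sd : dens R n -> nat -> \bar R,
    forall rho' rho : dens R n,
      expected_score (QScore sd (fun _ => mu0)) rho' rho
      = expected_score S rho' rho.
Proof.
move=> Htc S Sfin.
pose A rho' := \sum_(y <- outcomes (qs_mu S rho'))
   ((fine (qs_s S rho' y))%:C)%C *: effect (qs_mu S rho') y.
have hA : forall rho', exists c : nat -> R,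
    A rho' = \sum_(y <- outcomes mu0) ((c y)%:C)%C *: effect mu0 y.
  move=> rho'; apply/(Htc _).1/herm_sum => y hy.
  by case: (effect_psd hy).
pose c rho' := proj1_sig (constructive_indefinite_description _ (hA rho')).
have hc : forall rho', A rho' = \sum_(y <- outcomes mu0) ((c rho' y)%:C)%C *: effect mu0 y.
  by move=> rho'; rewrite /c; case: constructive_indefinite_description.
exists (fun rho' y => (c rho' y)%:E) => rho' rho.
rewrite /expected_score /=.
under eq_bigr do rewrite -EFinM.
rewrite sumEFin sum_Re -hc.
have -> : (\sum_(y <- outcomes (qs_mu S rho'))
   ((complex.Re (hs_inner (effect (qs_mu S rho') y) (proj1_sig rho)))%:E * qs_s S rho' y))%E
  = (\sum_(y <- outcomes (qs_mu S rho'))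
   ((complex.Re (hs_inner (effect (qs_mu S rho') y) (proj1_sig rho))) * fine (qs_s S rho' y))%:E)%E.
  apply: eq_bigr => y _; rewrite EFinM.
  by case: (Sfin rho' y) => r ->.
by rewrite sumEFin sum_Re.
Qed.
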